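(* Consider a linear scoring model on items with feature vectors $x_i\in\mathbb{R}^d$ and weight vector $w\in\mathbb{R}^d$, with scores $s_i=\sum_{f=1}^d w_f x_{if}$. For a pair of items $(i,j)$ put $\Delta_{ij}^{(f)}=w_f(x_{if}-x_{jf})$ and $Z_{ij}=\sum_{f=1}^d|\Delta_{ij}^{(f)}|$, and suppose $Z_{ij}>0$. Let $\{\Psi^{(d)}\}_{d\ge1}$ be any family of maps $\Psi^{(d)}:\mathbb{R}^d_{\ge0}\setminus\{0\}\to\Delta^{d-1}$ (values in the standard simplex) satisfying refinement consistency: for every $d$, every $a\in\mathbb{R}^d_{\ge0}\setminus\{0\}$, every $k$ and every $r,q\ge0$ with $r+q=a_k$, the vector $a^{[k\to(r,q)]}=(a_1,\dots,a_{k-1},r,q,a_{k+1},\dots,a_d)$ satisfies, if $a_k>0$, $\Psi^{(d+1)}(a^{[k\to(r,q)]})=(\Psi^{(d)}_1(a),\dots,\Psi^{(d)}_{k-1}(a),\frac{r}{a_k}\Psi^{(d)}_k(a),\frac{q}{a_k}\Psi^{(d)}_k(a),\Psi^{(d)}_{k+1}(a),\dots,\Psi^{(d)}_d(a))$, and, if $a_k=0$, $\Psi^{(d+1)}(a^{[k\to(0,0)]})$ agrees with $\Psi^{(d)}(a)$ on non-refined coordinates and is $0$ on the two refined coordinates. Then, with $a_f=|\Delta_{ij}^{(f)}|$, for every $f$, \[ \Psi^{(d)}_f(a)=\rho_{ij}^{(f)}:=\frac{|\Delta_{ij}^{(f)}|}{Z_{ij}}. \] That is, the influence share $\rho_{ij}^{(f)}$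 is the unique refinement-consistent local budgeting rule for linear pairwise effort.
   Context: $\Delta^{d-1}$ denotes the standard simplex $\{p\in\mathbb{R}^d_{\ge0}:\sum_f p_f=1\}$. A pair with $Z_{ij}>0$ is called informative; $\rho_{ij}^{(f)}$ is the local influence share of factor $f$. *)

(* Defs.v *)
From HB Require Import structures.
From mathcomp Require Import all_boot all_order all_algebra.
Set Implicit Arguments. Unset Strict Implicit. Unset Printing Implicit Defensive.
Import Order.TTheory GRing.Theory Num.Theory.
Local Open Scope ring_scope.

Section Defs.
Variable R : realFieldType.

Definition nonneg_nonzero (d : nat) (a : 'I_d -> R) : Prop :=
  (forall f, 0 <= a f) /\ (exists f, a f != 0).

Definition in_simplex (d : nat) (p : 'I_d -> R) : Prop :=
  (forall f, 0 <= p f) /\ \sum_(f < d) p f = 1.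

(* 0-based nat access to a vector (0 outside the range) *)
Definition vat (d : nat) (a : 'I_d -> R) (n : nat) : R :=
  if insub n is Some i then a i else 0.

(* a^{[k -> (r,q)]} = (a_1,...,a_{k-1}, r, q, a_{k+1}, ..., a_d)  (0-based k) *)
Definition refine (d : nat) (a : 'I_d -> R) (k : 'I_d) (r q : R) :
  'I_d.+1 -> R :=
  fun j => if (j < k)%N then vat a j
           else if (j == k :> nat) then r
           else if (j == k.+1 :> nat) then q
           else vat a j.-1.

Definition refinement_consistent
  (Psi : forall d : nat, ('I_d -> R) -> 'I_d -> R) : Prop :=
  forall (d : nat) (a : 'I_d -> R) (k : 'I_d) (r q : R),
    nonneg_nonzero a -> 0 <= r -> 0 <= q -> r + q = a k ->
    (0 < a k ->
       Psi d.+1 (refine a k r q) =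
       refine (Psi d a) k (r / a k * Psi d a k) (q / a k * Psi d a k)) /\
    (a k = 0 ->
       (forall j : 'I_d.+1, j != k :> nat -> j != k.+1 :> nat ->
          Psi d.+1 (refine a k 0 0) j = refine (Psi d a) k 0 0 j) /\
       Psi d.+1 (refine a k 0 0) (inord k) = 0 /\
       Psi d.+1 (refine a k 0 0) (inord k.+1) = 0).

Definition score (d : nat) (w xi : 'I_d -> R) : R := \sum_(f < d) w f * xi f.
Definition Delta (d : nat) (w xi xj : 'I_d -> R) (f : 'I_d) : R :=
  w f * (xi f - xj f).
Definition Zpair (d : nat) (w xi xj : 'I_d -> R) : R :=
  \sum_(f < d) `|Delta w xi xj f|.
Definition rho (d : nat) (w xi xj : 'I_d -> R) (f : 'I_d) : R :=
  `|Delta w xi xj f| / Zpair w xi xj.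

End Defs.

(* Main.v *)
Require Import Defs.
From mathcomp Require Import all_boot all_order all_algebra.
From Stdlib Require Import FunctionalExtensionality Classical.
From mathcomp Require Import ring.
Import Order.TTheory GRing.Theory Num.Theory.
Local Open Scope ring_scope.

Section Main.
Variable R : realFieldType.
Variable Psi : forall d : nat, ('I_d -> R) -> 'I_d -> R.
Hypothesis Hsimplex : forall (d : nat) (a : 'I_d -> R),
      nonneg_nonzero a -> in_simplex (Psi d a).
Hypothesis Hrefine : refinement_consistent Psi.

Lemma nnz_sum d (a : 'I_d -> R) : (forall f, 0 <= a f) -> 0 < \sum_f a f ->
  nonneg_nonzero a.
Proof.
move=> H0 Hs; split => //.
apply/not_all_not_ex => Hall.
have : \sum_f a f = 0 by apply: big1 => i _; apply/eqP/negbNE/negP/Hall.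
by move=> E; rewrite E ltxx in Hs.
Qed.

Lemma step d (b : 'I_d.+2 -> R) :
  (forall (a : 'I_d.+1 -> R), (forall f, 0 <= a f) -> 0 < \sum_f a f ->
     forall f, Psi d.+1 a f = a f / \sum_g a g) ->
  (forall f, 0 <= b f) -> 0 < \sum_f b f ->
  forall f, Psi d.+2 b f = b f / \sum_g b g.
Proof.
move=> IH Hb0 Hbs.
pose a : 'I_d.+1 -> R := fun g => if (g == 0 :> nat) then b ord0 + b (inord 1)
   else b (inord g.+1).
have Hb : b = refine a ord0 (b ord0) (b (inord 1)).
  apply: functional_extensionality => j; rewrite /refine /=.
  case: j => [[|[|j]] Hj] /=.
  - by congr b; apply: val_inj.
  - by congr b; apply: val_inj; rewrite /= inordK.
  - rewrite /vat; case: insubP => [g _ Hg|]; last by rewrite -ltnS Hj.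
    rewrite /a Hg /=; congr b; apply: val_inj; rewrite /= inordK //.
have Hsum : \sum_g a g = \sum_g b g.
  rewrite big_ord_recl [in RHS]big_ord_recl [in RHS]big_ord_recl /a /= addrA.
  congr (_ + _ + _); first by congr b; apply: val_inj; rewrite /= inordK.
  apply: eq_bigr => i _ /=; congr b; apply: val_inj; rewrite /= inordK //.
  by rewrite !ltnS.
have Ha0 : forall g, 0 <= a g.
  by move=> g; rewrite /a; case: ifP => _; rewrite ?addr_ge0.
have Has : 0 < \sum_g a g by rewrite Hsum.
have Hnnz := @nnz_sum _ a Ha0 Has.
have IHa := IH a Ha0 Has.
rewrite -Hsum.
set r := b ord0; set q := b (inord 1).
have Hr : 0 <= r by apply: Hb0.
have Hq : 0 <= q by apply: Hb0.
have Hrq : r + q = a ord0 by [].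
have [Hpos Hzero] := @Hrefine _ a ord0 r q Hnnz Hr Hq Hrq.
have Hs0 : \sum_g a g != 0 by rewrite gt_eqF.
move=> f; rewrite Hb.
have [Hap|Haz] := boolP (0 < a ord0).
  rewrite (Hpos Hap) /refine /= !IHa.
  have Ha0n : a ord0 != 0 by rewrite gt_eqF.
  case: ifP => _; first by rewrite mulrA divfK.
  case: ifP => _; first by rewrite mulrA divfK.
  rewrite /vat; case: insubP => [g _ _|]; first by rewrite IHa.
  by rewrite mul0r.
have Ha00 : a ord0 = 0 by apply/eqP; rewrite eq_le Ha0 andbT -leNgt in Haz *.
have Hr0 : r = 0.
  apply/eqP; rewrite eq_le Hr andbT -Ha00 -Hrq lerDl //.
have Hq0 : q = 0.
  apply/eqP; rewrite eq_le Hq andbT -Ha00 -Hrq lerDr //.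
rewrite -/r -/q; rewrite Hr0 Hq0 in Hzero *.
have [Hoth [H0 H1]] := Hzero Ha00.
case: f => [[|[|f]] Hf].
- rewrite [in RHS]/refine /= mul0r -[RHS]H0; congr (Psi _ _ _); apply: val_inj; rewrite /= inordK //.
- rewrite [in RHS]/refine /= mul0r -[RHS]H1; congr (Psi _ _ _); apply: val_inj; rewrite /= inordK //.
- rewrite Hoth // /refine /= /vat; case: insubP => [g _ _|]; first by rewrite IHa.
  by rewrite mul0r.
Qed.

Lemma main d (a : 'I_d -> R) : (forall f, 0 <= a f) -> 0 < \sum_f a f ->
  forall f, Psi d a f = a f / \sum_g a g.
Proof.
case: d a => [|d] a; first by move=> _ _ [].
elim: d a => [|d IH] a Ha Hs.
  have [_ Hsum] := @Hsimplex _ a (@nnz_sum _ a Ha Hs).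
  move: Hsum Hs; rewrite !big_ord1 => Hsum Hs f.
  by rewrite (ord1 f) Hsum divff // gt_eqF.
exact: step.
Qed.
End Main.

Theorem corollary4p2 (R : realFieldType)
  (Psi : forall d : nat, ('I_d -> R) -> 'I_d -> R)
  (Hsimplex : forall (d : nat) (a : 'I_d -> R),
      nonneg_nonzero a -> in_simplex (Psi d a))
  (Hrefine : refinement_consistent Psi)
  (n d : nat) (x : 'I_n -> 'I_d -> R) (w : 'I_d -> R) (i j : 'I_n)
  (HZ : 0 < Zpair w (x i) (x j)) :
  forall f : 'I_d,
    Psi d (fun g => `|Delta w (x i) (x j) g|) f = rho w (x i) (x j) f.
Proof.
move=> f; rewrite (@main R Psi Hsimplex Hrefine) //.
Qed.
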